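(* For integers $k \geq 0$ and $0 \leq n \leq k$, let $a_{k,n} = (-2)^k + 2^n$. Let $0 \leq n \leq k_1$ and $0 \leq m \leq k_2$ with $(k_1, n) \neq (k_2, m)$. Then $a_{k_1,n} = a_{k_2,m}$ if and only if $k_1$ and $k_2$ are both odd, $n = k_1$ and $m = k_2$. *)

(* Defs.v *)
From Stdlib Require Import ZArith Lia.
Open Scope Z_scope.

Definition a (k n : nat) : Z := (-2) ^ Z.of_nat k + 2 ^ Z.of_nat n.

(* Main.v *)
Require Import Defs.
From Stdlib Require Import ZArith Arith Lia.
Open Scope Z_scope.

Lemma negpow (k : nat) :
  (-2) ^ Z.of_nat k = (if Nat.even k then 1 else -1) * 2 ^ Z.of_nat k.
Proof.
  induction k as [|k IH]; [reflexivity|].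
  rewrite Nat2Z.inj_succ, !Z.pow_succ_r by lia.
  rewrite IH, Nat.even_succ, <- Nat.negb_even.
  destruct (Nat.even k); cbn [negb]; ring.
Qed.

Lemma pos_lt_bound (x y : Z) : 0 <= x < y -> 2 * 2 ^ x <= 2 ^ y.
Proof.
  intros H. rewrite <- Z.pow_succ_r by lia.
  apply Z.pow_le_mono_r; lia.
Qed.

Lemma key1 (x y u v : Z) : 0 <= u <= x -> 0 <= v <= y ->
  2 ^ x + 2 ^ u = 2 ^ y + 2 ^ v -> x = y /\ u = v.
Proof.
  intros Hu Hv E.
  assert (pu : 2 ^ u <= 2 ^ x) by (apply Z.pow_le_mono_r; lia).
  assert (pv : 2 ^ v <= 2 ^ y) by (apply Z.pow_le_mono_r; lia).
  assert (0 < 2 ^ u) by (apply Z.pow_pos_nonneg; lia).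
  assert (0 < 2 ^ v) by (apply Z.pow_pos_nonneg; lia).
  destruct (Z.lt_trichotomy x y) as [L|[L|L]].
  - pose proof (pos_lt_bound x y ltac:(lia)). lia.
  - subst. split; [reflexivity|].
    apply (Z.pow_inj_r 2); lia.
  - pose proof (pos_lt_bound y x ltac:(lia)). lia.
Qed.

Lemma key2 (x y u v : Z) : 0 <= u < x -> 0 <= v < y ->
  2 ^ u - 2 ^ x = 2 ^ v - 2 ^ y -> x = y /\ u = v.
Proof.
  intros Hu Hv E.
  assert (0 < 2 ^ u) by (apply Z.pow_pos_nonneg; lia).
  assert (0 < 2 ^ v) by (apply Z.pow_pos_nonneg; lia).
  destruct (Z.lt_trichotomy x y) as [L|[L|L]].
  - pose proof (pos_lt_bound (y-1) y ltac:(lia)).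
    assert (2 ^ x <= 2 ^ (y-1)) by (apply Z.pow_le_mono_r; lia).
    assert (2 ^ v <= 2 ^ (y-1)) by (apply Z.pow_le_mono_r; lia).
    lia.
  - subst. split; [reflexivity|].
    apply (Z.pow_inj_r 2); lia.
  - pose proof (pos_lt_bound (x-1) x ltac:(lia)).
    assert (2 ^ y <= 2 ^ (x-1)) by (apply Z.pow_le_mono_r; lia).
    assert (2 ^ u <= 2 ^ (x-1)) by (apply Z.pow_le_mono_r; lia).
    lia.
Qed.

Theorem lemma3 (k1 k2 n m : nat) :
  (n <= k1)%nat -> (m <= k2)%nat -> (k1, n) <> (k2, m) ->
  (a k1 n = a k2 m <->
   (Nat.odd k1 = true /\ Nat.odd k2 = true /\ n = k1 /\ m = k2)).
Proof.
  intros H1 H2 H3. unfold a. rewrite !negpow, <- !Nat.negb_even.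
  assert (pn : 2 ^ Z.of_nat n <= 2 ^ Z.of_nat k1) by (apply Z.pow_le_mono_r; lia).
  assert (pm : 2 ^ Z.of_nat m <= 2 ^ Z.of_nat k2) by (apply Z.pow_le_mono_r; lia).
  assert (0 < 2 ^ Z.of_nat n) by (apply Z.pow_pos_nonneg; lia).
  assert (0 < 2 ^ Z.of_nat m) by (apply Z.pow_pos_nonneg; lia).
  split.
  - intros E.
    destruct (Nat.even k1) eqn:E1, (Nat.even k2) eqn:E2; cbn [negb] in *.
    + exfalso. apply H3.
      destruct (key1 (Z.of_nat k1) (Z.of_nat k2) (Z.of_nat n) (Z.of_nat m))
        as [A B]; try lia.
      f_equal; lia.
    + lia.
    + lia.
    + destruct (Nat.eq_dec n k1) as [->|Hn].
      * destruct (Nat.eq_dec m k2) as [->|Hm]; [auto|].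
        exfalso.
        assert (2 ^ Z.of_nat m < 2 ^ Z.of_nat k2) by (apply Z.pow_lt_mono_r; lia).
        lia.
      * exfalso.
        assert (2 ^ Z.of_nat n < 2 ^ Z.of_nat k1) by (apply Z.pow_lt_mono_r; lia).
        destruct (Nat.eq_dec m k2) as [->|Hm]; [lia|].
        apply H3.
        destruct (key2 (Z.of_nat k1) (Z.of_nat k2) (Z.of_nat n) (Z.of_nat m))
          as [A B]; try lia.
        f_equal; lia.
  - intros [A [B [-> ->]]]. destruct (Nat.even k1), (Nat.even k2); try discriminate; ring.
Qed.
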